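(* Let $\mathcal{A}$ be a separating union-closed family with base set $[n]$, height $h$, and $h=|\mathcal{B}(\mathcal{A})|=4$. Then \[\mathrm{Avg}(\mathcal{A}) = \frac{\sum_{A\in\mathcal{A}}|A|}{|\mathcal{A}|} > \Big\lfloor \frac{n}{2} \Big\rfloor - 1.\]
   Context: A family of sets $\mathcal{A}$ is union-closed if it is a finite family of distinct finite sets with at least one nonempty member set, and $X,Y\in\mathcal{A}$ implies $X\cup Y\in\mathcal{A}$ (the empty set may be a member). For a family $\mathcal{F}$, $b(\mathcal{F})=\bigcup_{F\in\mathcal{F}}F$; the base set $b(\mathcal{A})$ is denoted $[n]=\{1,\dots,n\}$. $\mathcal{A}$ is separating if for any two distinct $x,y\in[n]$ there is $A\in\mathcal{A}$ containing exactly one of $x,y$. A chain in $\mathcal{A}$ is a subfamily any two distinct members of which are comparable under proper inclusion; the height $h$ of $\mathcal{A}$ is the maximum size of a chain in $\mathcal{A}$. For real $x\ge 0$, $\mathcal{A}_{<x}=\{A\in\mathcal{A} : |A|<x\}$. For $\mathcal{S}\subseteq\mathcal{A}$ and $S\in\mathcal{S}$, $\mathrm{irr}_{\mathcal{S}}(S)=\{s\in S : s\notin b(\mathcal{S}\setminus\{S\})\}$, and $\mathcal{S}$ is irredundant if $\mathrm{irr}_{\mathcal{S}}(S)\neq\emptyset$ for every $S\in\mathcal{S}$. Set $B=b(\mathcal{A}_{<n/2})$, and let $\mathcal{B}(\mathcal{A})$ denote any irredundant subfamily of $\mathcal{A}_{<n/2}$ of minimum size such that $b(\mathcal{B}(\mathcal{A}))=B$.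 *)

(* Defs.v *)
(* Families of subsets of [n] are modelled as
   {set {set 'I_n}} (element i : 'I_n stands for i+1). *)
From mathcomp Require Import all_boot all_order all_algebra.
Set Implicit Arguments. Unset Strict Implicit. Unset Printing Implicit Defensive.

Section Defs.
Variable T : finType.
Implicit Types (F S : {set {set T}}) (X Y : {set T}).

Definition bunion F : {set T} := \bigcup_(X in F) X.

Definition union_closed F : Prop :=
  (exists2 X, X \in F & X != set0) /\
  (forall X Y, X \in F -> Y \in F -> X :|: Y \in F).

Definition separating F : Prop :=
  forall x y : T, x \in bunion F -> y \in bunion F -> x != y ->
    exists2 X, X \in F & (x \in X) != (y \in X).

Definition is_chain (C : {set {set T}}) : bool :=
  [forall X in C, forall Y in C, (X != Y) ==> ((X \proper Y) || (Y \proper X))].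

Definition height F : nat :=
  \max_(C in powerset F | is_chain C) #|C|.

(* F_{<x} with x = k/2, i.e. members A with |A| < k/2 *)
Definition below_half F (k : nat) : {set {set T}} :=
  [set X in F | (2 * #|X| < k)%N].

Definition irr S X : {set T} := X :\: bunion (S :\ X).

Definition irredundant S : bool := [forall X in S, irr S X != set0].

(* S is a valid choice of B(F) (w.r.t. base-set size k): an irredundant
   subfamily of F_{<k/2} with b(S) = b(F_{<k/2}), of minimum size among
   all such subfamilies. *)
Definition is_B F (k : nat) S : Prop :=
  [/\ S \subset below_half F k, irredundant S,
      bunion S = bunion (below_half F k) &
      forall S', S' \subset below_half F k -> irredundant S' ->
        bunion S' = bunion (below_half F k) -> (#|S| <= #|S'|)%N].

End Defs.

Definition avg (T : finType) (F : {set {set T}}) : rat :=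
  ((\sum_(X in F) #|X|)%:R / (#|F|)%:R)%R.

(* Main.v *)
Require Import Defs.
From mathcomp Require Import all_boot all_order all_algebra.
From mathcomp Require Import zify.
Import Order.TTheory GRing.Theory Num.Theory.
Set Implicit Arguments. Unset Strict Implicit. Unset Printing Implicit Defensive.

Lemma properI (T : finType) (A B : {set T}) x :
  A \subset B -> x \in B -> x \notin A -> A \proper B.
Proof. by move=> sAB xB xA; apply/properP; split => //; exists x. Qed.

Lemma bunion_in (T : finType) (F G : {set {set T}}) :
  union_closed F -> G \subset F -> G != set0 -> bunion G \in F.
Proof.
move=> [_ huc]; move: {2}#|G| (erefl #|G|) => k; elim: k G => [|k IH] G hk sGF nG.
  by move: nG; rewrite -cards_eq0 hk.
case/set0Pn: nG => X XG.
rewrite /bunion (big_setD1 _ XG) /=.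
have XF : X \in F by apply: (subsetP sGF).
have [->|nz] := eqVneq (G :\ X) set0; first by rewrite big_set0 setU0.
apply: huc => //; apply: IH => //.
  by move: hk; rewrite (cardsD1 X G) XG add1n => -[].
by apply: subset_trans sGF; apply: subsetDl.
Qed.

Lemma topF (T : finType) (F : {set {set T}}) :
  union_closed F -> bunion F = setT -> setT \in F.
Proof.
move=> huc hb; rewrite -hb; apply: bunion_in => //.
by case: huc => -[X XF _] _; apply/set0Pn; exists X.
Qed.

Lemma extract (T : finType) (G : {set {set T}}) :
  exists G' : {set {set T}}, [/\ G' \subset G, irredundant G' & bunion G' = bunion G].
Proof.
move: {2}#|G| (leqnn #|G|) => k; elim: k G => [|k IH] G hk.
  exists G; split => //; move: hk; rewrite leqn0 cards_eq0 => /eqP ->.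
  by apply/forallP => X; rewrite inE.
have [irrG|] := boolP (irredundant G); first by exists G.
rewrite /irredundant negb_forall => /existsP [X]; rewrite negb_imply negbK => /andP [XG /eqP hX].
have eqU : bunion (G :\ X) = bunion G.
  rewrite /bunion [RHS](big_setD1 _ XG) /=; apply/esym/setUidPr.
  by move: hX; rewrite /irr => /eqP; rewrite setD_eq0.
have [G' [s1 s2 s3]] : exists G' : {set {set T}}, [/\ G' \subset G :\ X, irredundant G' & bunion G' = bunion (G :\ X)].
  apply: IH; move: hk; rewrite (cardsD1 X G) XG add1n ltnS //.
exists G'; split => //; last by rewrite s3.
by apply: subset_trans s1 (subsetDl _ _).
Qed.
Lemma no5 (T : finType) (F : {set {set T}}) (C1 C2 C3 C4 C5 : {set T}) :
  height F = 4 -> C1 \in F -> C2 \in F -> C3 \in F -> C4 \in F -> C5 \in F ->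
  C1 \proper C2 -> C2 \proper C3 -> C3 \proper C4 -> C4 \proper C5 -> False.
Proof.
move=> hh h1 h2 h3 h4 h5 p12 p23 p34 p45.
have p13 := proper_trans p12 p23. have p14 := proper_trans p13 p34.
have p15 := proper_trans p14 p45. have p24 := proper_trans p23 p34.
have p25 := proper_trans p24 p45. have p35 := proper_trans p34 p45.
have ne : forall X Y : {set T}, X \proper Y -> (X == Y) = false.
  by move=> X Y /proper_neq /negbTE.
set C := [set X in [:: C1; C2; C3; C4; C5]].
have mem5 : forall X, X \in C -> X = C1 \/ X = C2 \/ X = C3 \/ X = C4 \/ X = C5.
  move=> X; rewrite inE !in_cons in_nil orbF.
  by move=> /orP[/eqP->|/orP[/eqP->|/orP[/eqP->|/orP[/eqP->|/eqP->]]]];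
    [left|right;left|right;right;left|right;right;right;left|right;right;right;right].
have hC : C \in powerset F.
  rewrite inE; apply/subsetP => X /mem5 [->|[->|[->|[->|->]]]] //.
have cC : is_chain C.
  apply/forallP => X; apply/implyP => HX; apply/forallP => Y; apply/implyP => HY.
  apply/implyP => nXY.
  move: nXY; case: (mem5 _ HX) => [->|[->|[->|[->|->]]]]; case: (mem5 _ HY) => [->|[->|[->|[->|->]]]];
  rewrite ?eqxx // ?p12 ?p13 ?p14 ?p15 ?p23 ?p24 ?p25 ?p34 ?p35 ?p45 ?orbT //.
have card5 : #|C| = 5.
  rewrite cardsE; apply/card_uniqP.
  by rewrite /= !inE !negb_or (ne _ _ p12) (ne _ _ p13) (ne _ _ p14) (ne _ _ p15)
    (ne _ _ p23) (ne _ _ p24) (ne _ _ p25) (ne _ _ p34) (ne _ _ p35) (ne _ _ p45).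
have : #|C| <= height F by rewrite /height; apply: (@leq_bigmax_cond _ _ _ C); rewrite hC cC.
by rewrite card5 hh.
Qed.

Definition cover4 (T : finType) (Z1 Z2 Z3 Z4 : {set T}) :=
  forall x, [|| x \in Z1, x \in Z2, x \in Z3 | x \in Z4].

Record ctx (T : finType) (F : {set {set T}}) (n : nat) : Prop := Ctx {
  c_uc : union_closed F;
  c_b : bunion F = setT;
  c_sep : separating F;
  c_h : height F = 4;
  c_no3 : forall X Y Z, X \in F -> Y \in F -> Z \in F ->
     2 * #|X| < n -> 2 * #|Y| < n -> 2 * #|Z| < n -> X :|: Y :|: Z != setT;
  c_n : #|T| = n }.

Lemma ucU (T : finType) (F : {set {set T}}) X Y :
  union_closed F -> X \in F -> Y \in F -> X :|: Y \in F.
Proof. by case=> _ h; apply: h. Qed.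

Lemma Lsep (T : finType) (F : {set {set T}}) n (c : ctx F n) C1 C2 V x y :
  C1 \in F -> C2 \in F -> V \in F -> C1 \proper C2 -> C2 \proper V ->
  x \notin V -> y \notin V -> x = y.
Proof.
case: c => huc hb hsep hh _ _ h1 h2 hV p12 p2V xV yV.
apply/eqP; apply/negPn/negP => nxy.
have xb : x \in bunion F by rewrite hb inE.
have yb : y \in bunion F by rewrite hb inE.
have [Y YF hY] := hsep x y xb yb nxy.
have tF := topF huc hb.
have VYF := ucU huc hV YF.
case xY: (x \in Y); move: hY; rewrite xY => /= hY.
- have yY : y \notin Y by move: hY; case: (y \in Y).
  apply: (no5 hh h1 h2 hV VYF tF p12 p2V).
    by apply: (properI (x := x)); rewrite ?subsetUl // !inE ?xY ?orbT // (negbTE xV).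
  by apply: (properI (x := y)); rewrite ?subsetT // !inE (negbTE yV) (negbTE yY).
- have yY : y \in Y by move: hY; case: (y \in Y).
  apply: (no5 hh h1 h2 hV VYF tF p12 p2V).
    by apply: (properI (x := y)); rewrite ?subsetUl // !inE ?yY ?orbT // (negbTE yV).
  by apply: (properI (x := x)); rewrite ?subsetT // !inE (negbTE xV) xY.
Qed.

Lemma cardS (T : finType) (A : {set T}) : #|A| = \sum_(x : T) (x \in A).
Proof. rewrite -sum1_card big_mkcond /=; apply: eq_bigr => x _; by case: (x \in A). Qed.

Lemma sum2 (T : finType) : \sum_(x : T) 2 = 2 * #|T|.
Proof. by rewrite sum_nat_const mulnC. Qed.


Lemma priv1 (T : finType) (F : {set {set T}}) n (c : ctx F n) Z1 Z2 Z3 Z4 :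
  Z1 \in F -> Z2 \in F -> Z3 \in F -> Z4 \in F ->
  2 * #|Z1| < n -> 2 * #|Z2| < n -> 2 * #|Z3| < n -> 2 * #|Z4| < n ->
  cover4 Z1 Z2 Z3 Z4 ->
  exists q, [/\ q \in Z1, q \notin Z2, q \notin Z3 & q \notin Z4].
Proof.
move=> h1 h2 h3 h4 s1 s2 s3 s4 cv.
have := c_no3 c h2 h3 h4 s2 s3 s4.
rewrite -subTset => /subsetPn [q _]; rewrite !inE !negb_or => /andP [/andP [a b] d].
exists q; split => //; move: (cv q).
by rewrite (negbTE a) (negbTE b) (negbTE d) !orbF.
Qed.

Ltac covp cv := let x := fresh "x" in move=> x; move: (cv x);
  do ! case: (_ \in _) => //.

Lemma comp1 (T : finType) (F : {set {set T}}) n (c : ctx F n) Z1 Z2 Z3 Z4 :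
  Z1 \in F -> Z2 \in F -> Z3 \in F -> Z4 \in F ->
  2 * #|Z1| < n -> 2 * #|Z2| < n -> 2 * #|Z3| < n -> 2 * #|Z4| < n ->
  cover4 Z1 Z2 Z3 Z4 ->
  forall x y, x \notin Z2 :|: Z3 :|: Z4 -> y \notin Z2 :|: Z3 :|: Z4 -> x = y.
Proof.
move=> h1 h2 h3 h4 s1 s2 s3 s4 cv x y xV yV.
have [q3 [a3 b3 c3 d3]] : exists q, [/\ q \in Z3, q \notin Z1, q \notin Z2 & q \notin Z4].
  by apply: (priv1 c h3 h1 h2 h4) => //; covp cv.
have [q4 [a4 b4 c4 d4]] : exists q, [/\ q \in Z4, q \notin Z1, q \notin Z2 & q \notin Z3].
  by apply: (priv1 c h4 h1 h2 h3) => //; covp cv.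
have huc := c_uc c.
apply: (Lsep c (C1 := Z2) (C2 := Z2 :|: Z3)) xV yV => //.
- exact: ucU.
- by apply: ucU => //; apply: ucU.
- by apply: (properI (x := q3)); rewrite ?subsetUl // !inE ?a3 ?orbT.
- by apply: (properI (x := q4)); rewrite ?subsetUl // !inE ?a4 ?orbT // negb_or c4 d4.
Qed.

Lemma sum4 (T : finType) (F : {set {set T}}) n (c : ctx F n) Z1 Z2 Z3 Z4 :
  Z1 \in F -> Z2 \in F -> Z3 \in F -> Z4 \in F ->
  2 * #|Z1| < n -> 2 * #|Z2| < n -> 2 * #|Z3| < n -> 2 * #|Z4| < n ->
  cover4 Z1 Z2 Z3 Z4 ->
  2 * n <= #|Z1| + #|Z2| + #|Z3| + #|Z4| + 4.
Proof.
move=> h1 h2 h3 h4 s1 s2 s3 s4 cv.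
have le1 : forall V : {set T}, (forall x y, x \notin V -> y \notin V -> x = y) -> #|~: V| <= 1.
  move=> V hV; apply/card_le1_eqP => x y; rewrite !inE => xV yV; exact: hV.
have e1 := le1 _ (comp1 c h1 h2 h3 h4 s1 s2 s3 s4 cv).
have e2 : #|~: (Z1 :|: Z3 :|: Z4)| <= 1.
  by apply: le1; apply: (comp1 c h2 h1 h3 h4) => //; covp cv.
have e3 : #|~: (Z1 :|: Z2 :|: Z4)| <= 1.
  by apply: le1; apply: (comp1 c h3 h1 h2 h4) => //; covp cv.
have e4 : #|~: (Z1 :|: Z2 :|: Z3)| <= 1.
  by apply: le1; apply: (comp1 c h4 h1 h2 h3) => //; covp cv.
have key : \sum_(x : T) 2 <= \sum_(x : T) ((x \in Z1) + (x \in Z2) + (x \in Z3) + (x \in Z4)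
   + ((x \in ~: (Z2 :|: Z3 :|: Z4)) + (x \in ~: (Z1 :|: Z3 :|: Z4))
   + (x \in ~: (Z1 :|: Z2 :|: Z4)) + (x \in ~: (Z1 :|: Z2 :|: Z3)))).
  apply: leq_sum => x _; move: (cv x); rewrite !inE.
  by case: (x \in Z1); case: (x \in Z2); case: (x \in Z3); case: (x \in Z4).
move: key; rewrite sum2 (c_n c) !big_split /= -!cardS.
lia.
Qed.

Lemma repl (T : finType) (F : {set {set T}}) n (c : ctx F n) Z1 Z2 Z3 Z4 W :
  Z1 \in F -> Z2 \in F -> Z3 \in F -> Z4 \in F ->
  2 * #|Z1| < n -> 2 * #|Z2| < n -> 2 * #|Z3| < n -> 2 * #|Z4| < n ->
  cover4 Z1 Z2 Z3 Z4 -> W \in F -> W != Z1 ->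
  [\/ cover4 W Z1 Z3 Z4, cover4 W Z1 Z2 Z4 | cover4 W Z1 Z2 Z3].
Proof.
move=> h1 h2 h3 h4 s1 s2 s3 s4 cv hW nW.
have huc := c_uc c.
have [q2 [a2 b2 c2 d2]] : exists q, [/\ q \in Z2, q \notin Z1, q \notin Z3 & q \notin Z4].
  by apply: (priv1 c h2 h1 h3 h4) => //; covp cv.
have [q3 [a3 b3 c3 d3]] : exists q, [/\ q \in Z3, q \notin Z1, q \notin Z2 & q \notin Z4].
  by apply: (priv1 c h3 h1 h2 h4) => //; covp cv.
have [q4 [a4 b4 c4 d4]] : exists q, [/\ q \in Z4, q \notin Z1, q \notin Z2 & q \notin Z3].
  by apply: (priv1 c h4 h1 h2 h3) => //; covp cv.
case q2W: (q2 \in W).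
  apply: Or31 => x; case xV: (x \in Z1 :|: Z3 :|: Z4).
    by move: xV; rewrite !inE; do ! case: (_ \in _).
  have -> : x = q2.
    apply: (comp1 c h2 h1 h3 h4) => //; first by covp cv.
      by rewrite xV.
    by rewrite !inE (negbTE b2) (negbTE c2) (negbTE d2).
  by rewrite q2W.
case q3W: (q3 \in W).
  apply: Or32 => x; case xV: (x \in Z1 :|: Z2 :|: Z4).
    by move: xV; rewrite !inE; do ! case: (_ \in _).
  have -> : x = q3.
    apply: (comp1 c h3 h1 h2 h4) => //; first by covp cv.
      by rewrite xV.
    by rewrite !inE (negbTE b3) (negbTE c3) (negbTE d3).
  by rewrite q3W.
case q4W: (q4 \in W).
  apply: Or33 => x; case xV: (x \in Z1 :|: Z2 :|: Z3).
    by move: xV; rewrite !inE; do ! case: (_ \in _).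
  have -> : x = q4.
    apply: (comp1 c h4 h1 h2 h3) => //; first by covp cv.
      by rewrite xV.
    by rewrite !inE (negbTE b4) (negbTE c4) (negbTE d4).
  by rewrite q4W.
exfalso.
have hh := c_h c.
have F2 := ucU huc hW h2.
have F3 := ucU huc F2 h3.
have F4 := ucU huc F3 h4.
have P2 : W \proper W :|: Z2.
  by apply: (properI (x := q2)); rewrite ?subsetUl // ?inE ?a2 ?orbT ?q2W.
have P3 : W :|: Z2 \proper W :|: Z2 :|: Z3.
  by apply: (properI (x := q3)); rewrite ?subsetUl // ?inE ?a3 ?orbT // q3W (negbTE c3).
have P4 : W :|: Z2 :|: Z3 \proper W :|: Z2 :|: Z3 :|: Z4.
  by apply: (properI (x := q4)); rewrite ?subsetUl // ?inE ?a4 ?orbT // q4W (negbTE c4) (negbTE d4).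
have [sub|nsub] := boolP (Z1 \subset W).
  apply: (no5 hh h1 hW F2 F3 F4 _ P2 P3 P4).
  by rewrite properEneq eq_sym nW sub.
case/subsetPn: nsub => z zZ zW.
have G1 := ucU huc hW h1.
have G2 := ucU huc G1 h2.
have G3 := ucU huc G2 h3.
have G4 := ucU huc G3 h4.
apply: (no5 hh hW G1 G2 G3 G4).
- by apply: (properI (x := z)); rewrite ?subsetUl // ?inE ?zZ ?orbT.
- by apply: (properI (x := q2)); rewrite ?subsetUl // ?inE ?a2 ?orbT // q2W (negbTE b2).
- by apply: (properI (x := q3)); rewrite ?subsetUl // ?inE ?a3 ?orbT // q3W (negbTE b3) (negbTE c3).
- by apply: (properI (x := q4)); rewrite ?subsetUl // ?inE ?a4 ?orbT // q4W (negbTE b4) (negbTE c4) (negbTE d4).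
Qed.

Lemma card4 (U : finType) (S : {set U}) : #|S| = 4 ->
  exists X1 X2 X3 X4, [/\ [&& X1 != X2, X1 != X3, X1 != X4, X2 != X3 & X2 != X4],
     X3 != X4 & forall X, (X \in S) = (X \in [:: X1; X2; X3; X4])].
Proof.
rewrite cardE; have u := enum_uniq (pred_of_set S).
have m : forall X, (X \in S) = (X \in enum S) by move=> X; rewrite mem_enum.
case E: (enum S) u m => [|X1 [|X2 [|X3 [|X4 [|? ?]]]]] //= u m _.
exists X1, X2, X3, X4; split => //.
by move: u; rewrite !inE !negb_or => /and4P [/and3P [a b d] /andP [e f] _ _]; rewrite a b d e f.
by move: u; rewrite !inE !negb_or => /and4P [_ _ -> _].
Qed.

Lemma irr_priv (U : finType) (S : {set {set U}}) X Y p :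
  p \in irr S X -> Y \in S -> Y != X -> p \notin Y.
Proof.
rewrite /irr inE => /andP [pn _] YS nYX; apply: contra pn => pY.
by apply/bigcupP; exists Y => //; rewrite !inE nYX YS.
Qed.

Lemma mainT (T : finType) (F : {set {set T}}) n :
  #|T| = n -> union_closed F -> bunion F = setT -> separating F -> height F = 4 ->
  (exists2 S, is_B F n S & #|S| = 4) ->
  n./2 * #|F| < \sum_(Y in F) #|Y| + #|F|.
Proof.
move=> hn huc hb hsep hh [S hS hS4].
case: hS => sSB irrS bS minS.
have [X1 [X2 [X3 [X4 [dist d34 memS]]]]] := card4 hS4.
case/and5P: dist => d12 d13 d14 d23 d24.
have XS1 : X1 \in S by rewrite memS !inE eqxx ?orbT.
have XS2 : X2 \in S by rewrite memS !inE eqxx ?orbT.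
have XS3 : X3 \in S by rewrite memS !inE eqxx ?orbT.
have XS4 : X4 \in S by rewrite memS !inE eqxx ?orbT.
have inF : forall X, X \in S -> X \in F /\ 2 * #|X| < n.
  by move=> X /(subsetP sSB); rewrite inE => /andP [-> ->].
have [h1 s1] := inF _ XS1. have [h2 s2] := inF _ XS2.
have [h3 s3] := inF _ XS3. have [h4 s4] := inF _ XS4.
have pr : forall X, X \in S -> exists p, p \in irr S X.
  by move=> X XS; move/forallP: irrS => /(_ X); rewrite XS /= => /set0Pn.
have inX : forall X p, p \in irr S X -> p \in X by move=> X p; rewrite inE => /andP [].
have [p1 i1] := pr _ XS1. have [p2 i2] := pr _ XS2.
have [p3 i3] := pr _ XS3. have [p4 i4] := pr _ XS4.
have m1 := inX _ _ i1. have m2 := inX _ _ i2. have m3 := inX _ _ i3. have m4 := inX _ _ i4.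
have d21 : X2 != X1 by rewrite eq_sym.
have d31 : X3 != X1 by rewrite eq_sym.
have d41 : X4 != X1 by rewrite eq_sym.
have d32 : X3 != X2 by rewrite eq_sym.
have d42 : X4 != X2 by rewrite eq_sym.
have d43 : X4 != X3 by rewrite eq_sym.
have n21 := negbTE (irr_priv i1 XS2 d21). have n31 := negbTE (irr_priv i1 XS3 d31).
have n41 := negbTE (irr_priv i1 XS4 d41).
have n12 := negbTE (irr_priv i2 XS1 d12). have n32 := negbTE (irr_priv i2 XS3 d32).
have n42 := negbTE (irr_priv i2 XS4 d42).
have n13 := negbTE (irr_priv i3 XS1 d13). have n23 := negbTE (irr_priv i3 XS2 d23).
have n43 := negbTE (irr_priv i3 XS4 d43).
have n14 := negbTE (irr_priv i4 XS1 d14). have n24 := negbTE (irr_priv i4 XS2 d24).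
have n34 := negbTE (irr_priv i4 XS3 d34).
have tF := topF huc hb.
have cvS : cover4 X1 X2 X3 X4.
  move=> x; apply/negPn/negP; rewrite !negb_or => /and4P [x1 x2 x3 x4].
  have F2 := ucU huc h1 h2. have F3 := ucU huc F2 h3. have F4 := ucU huc F3 h4.
  apply: (no5 hh h1 F2 F3 F4 tF).
  - by apply: (properI (x := p2)); rewrite ?subsetUl // ?inE ?m2 ?orbT // n12.
  - by apply: (properI (x := p3)); rewrite ?subsetUl // ?inE ?m3 ?orbT // n13 n23.
  - by apply: (properI (x := p4)); rewrite ?subsetUl // ?inE ?m4 ?orbT // n14 n24 n34.
  - apply: (properI (x := x)); rewrite ?subsetT // !inE.
    by rewrite (negbTE x1) (negbTE x2) (negbTE x3) (negbTE x4).
have bSt : bunion S = setT.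
  apply/eqP; rewrite eqEsubset subsetT /=; apply/subsetP => x _.
  by apply/bigcupP; case/or4P: (cvS x) => h; [exists X1|exists X2|exists X3|exists X4].
have no3 : forall X Y Z, X \in F -> Y \in F -> Z \in F ->
     2 * #|X| < n -> 2 * #|Y| < n -> 2 * #|Z| < n -> X :|: Y :|: Z != setT.
  move=> X Y Z hX hY hZ sX sY sZ; apply/eqP => E.
  set G := [set X; Y; Z].
  have sG : G \subset below_half F n.
    by apply/subsetP => W; rewrite !inE => /orP [/orP [] | ] /eqP ->; rewrite /below_half ?inE ?hX ?hY ?hZ ?sX ?sY ?sZ.
  have [G' [sG' irrG' bG']] := extract G.
  have bGt : bunion G = setT.
    apply/eqP; rewrite eqEsubset subsetT /=; apply/subsetP => x _.
    have : x \in X :|: Y :|: Z by rewrite E inE.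
    rewrite !inE => /orP [/orP [h|h]|h]; apply/bigcupP;
      [exists X|exists Y|exists Z] => //; rewrite !inE eqxx /= ?orbT //.
  have := minS G' (subset_trans sG' sG) irrG'.
  rewrite bG' bGt -bS bSt => /(_ erefl) hmin.
  have c3 : #|G| <= 3.
    have -> : #|G| = #|[:: X; Y; Z]| by apply: eq_card => W; rewrite !inE ?orbF ?orbA.
    exact: card_size.
  have hsub := subset_leq_card sG'; rewrite hS4 in hmin.
  by clear -hmin c3 hsub; lia.
have c : ctx F n := Ctx huc hb hsep hh no3 hn.
have incov : forall W, W \in F -> 2 * #|W| < n -> exists A B C,
    [/\ A \in F, B \in F, C \in F, [/\ 2 * #|A| < n, 2 * #|B| < n & 2 * #|C| < n]
      & cover4 W A B C].
  move=> W hW sW; case: (eqVneq W X1) => [->|nW].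
    by exists X2, X3, X4; split.
  case: (repl c h1 h2 h3 h4 s1 s2 s3 s4 cvS hW nW) => cv.
  - by exists X1, X3, X4; split.
  - by exists X1, X2, X4; split.
  - by exists X1, X2, X3; split.
have hodd := odd_double_half n; rewrite -muln2 in hodd.
have o1 := leq_b1 (odd n).
have B1 : forall W, W \in F -> n./2 <= #|W| + 2.
  move=> W hW; case: (ltnP (2 * #|W|) n) => sW; last by clear -hodd o1 sW; lia.
  have [A [B [C [hA hB hC [sA sB sC] cv]]]] := incov W hW sW.
  have e := sum4 c hW hA hB hC sW sA sB sC cv.
  by clear -hodd o1 sA sB sC e; lia.
set Bad := [set W in F | #|W|.+1 < n./2].
have B2 : #|Bad| <= 1.
  apply/card_le1_eqP => W W'; rewrite !inE => /andP [hW bW] /andP [hW' bW'].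
  apply/eqP/negPn/negP => nWW.
  have sW : 2 * #|W| < n by clear -hodd o1 bW; lia.
  have [A [B [C [hA hB hC [sA sB sC] cv]]]] := incov W hW sW.
  have e1 := sum4 c hW hA hB hC sW sA sB sC cv.
  have sW' : 2 * #|W'| < n by clear -hodd o1 bW'; lia.
  have nW : W' != W := nWW.
  case: (repl c hW hA hB hC sW sA sB sC cv hW' nW) => cv'.
  - have e2 := sum4 c hW' hW hB hC sW' sW sB sC cv'.
    by clear -hodd o1 bW bW' sA sB sC e1 e2; lia.
  - have e2 := sum4 c hW' hW hA hC sW' sW sA sC cv'.
    by clear -hodd o1 bW bW' sA sB sC e1 e2; lia.
  - have e2 := sum4 c hW' hW hA hB sW' sW sA sB cv'.
    by clear -hodd o1 bW bW' sA sB sC e1 e2; lia.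
have n0 : 0 < n.
  case: huc => -[X _ /set0Pn [x _]] _; rewrite -hn; apply/card_gt0P; by exists x.
have key : \sum_(Y in F) (n./2 + (Y == setT) + (Y == setT)) <= \sum_(Y in F) (#|Y| + 1 + (Y \in Bad)).
  apply: leq_sum => Y hY.
  have [->|nT] := eqVneq Y setT.
    have -> : (setT \in Bad) = false.
      rewrite inE tF cardsT hn /=; apply/negbTE; rewrite -leqNgt.
      by clear -hodd o1 n0; lia.
    rewrite cardsT hn ?eqxx /nat_of_bool.
    by clear -hodd o1 n0; lia.
  rewrite /nat_of_bool; case bY : (Y \in Bad).
    by move: (B1 _ hY) => h; clear -h; lia.
  by move: bY; rewrite inE hY /= => /negbT; rewrite -leqNgt => h; clear -h; lia.
have one : \sum_(Y in F) (Y == setT : nat) = 1.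
  rewrite (big_setD1 _ tF) /= eqxx big1 // => Y; rewrite !inE => /andP [/negPf -> _].
  by [].
move: key; rewrite !big_split /= one sum_nat_const sum1_card.
have -> : \sum_(i in F) (i \in Bad) = #|Bad|.
  rewrite cardS big_mkcond /=; apply: eq_bigr => Y _.
  by case hY: (Y \in F); rewrite // inE hY.
rewrite [#|F| * _]mulnC; set s := \sum_(Y in F) #|Y|; set k := n./2 * #|F|.
move=> h; change (is_true (k + 1 + 1 <= s + #|F| + #|Bad|)) in h.
change (is_true (k < s + #|F|)).
by clearbody s k Bad; clear -h B2; lia.
Qed.

Unset Implicit Arguments.

Theorem theorem4p1 (n : nat) (A : {set {set 'I_n}}) :
  union_closed A ->
  bunion A = [set: 'I_n] ->
  separating A ->
  height A = 4 ->
  (exists2 S, is_B A n S & #|S| = 4) ->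
  (avg A > (n./2)%:R - 1)%R.
Proof.
move=> huc hb hsep hh hS.
have key := mainT (card_ord n) huc hb hsep hh hS.
have F0 : 0 < #|A|.
  by case: huc => -[X XA _] _; apply/card_gt0P; exists X.
rewrite /avg ltr_pdivlMr ?ltr0n // mulrBl mul1r ltrBlDr -natrM -natrD ltr_nat.
exact: key.
Qed.
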